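(* Let $\mathbb F$ be a field, let $\chi,\eta\in\mathbb F[x]$ be monic polynomials of degree $l\ge1$, and let $a,b,c,d\in\mathbb F$ with $ad-bc\ne0$. (a) If the matrix pair $(aI_l+b\Phi_\chi,\ cI_l+d\Phi_\chi)$ is equivalent to the pair $(I_l,\Phi_\eta)$, then \[ \eta(x)=\varepsilon\,(d-xb)^l\,\chi\!\left(\frac{xa-c}{d-xb}\right) \] for some $\varepsilon\in\mathbb F$. (b) If $aI_l+b\Phi_\chi$ is nonsingular and $\eta(x)=\varepsilon\,(d-xb)^l\,\chi\!\left(\frac{xa-c}{d-xb}\right)$ for some $\varepsilon\in\mathbb F$, then the characteristic polynomials of $(cI_l+d\Phi_\chi)(aI_l+b\Phi_\chi)^{-1}$ and of $\Phi_\eta$ are equal.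
   Context: For a monic $\chi(x)=x^l-u_1x^{l-1}-\dots-u_l\in\mathbb F[x]$, $l\ge1$, $\Phi_\chi$ is the $l\times l$ companion matrix with ones on the subdiagonal, last column $(u_l,\dots,u_2,u_1)^T$ (top to bottom), and zeros elsewhere; its characteristic polynomial is $\chi$. Two pairs $(A,B)$, $(A',B')$ of matrices of the same size are equivalent if there exist nonsingular $P,Q$ with $A'=PAQ$ and $B'=PBQ$. The expression $(d-xb)^l\chi\left(\frac{xa-c}{d-xb}\right)$ denotes the polynomial obtained by clearing denominators (a polynomial since $\deg\chi=l$). *)

(* Defs.v *)
From HB Require Import structures.
From mathcomp Require Import all_boot all_order all_algebra.
Set Implicit Arguments. Unset Strict Implicit. Unset Printing Implicit Defensive.
Import GRing.Theory.
Local Open Scope ring_scope.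

(* Companion matrix of chi = x^l - u_1 x^{l-1} - ... - u_l  (so u_k = - chi`_(l-k)):
   ones on the subdiagonal (entry (j+1, j)), last column (u_l, ..., u_1)^T,
   i.e. entry (i, l-1) = u_(l-i) = - chi`_i, zeros elsewhere. *)
Definition companion (F : fieldType) (l : nat) (chi : {poly F}) : 'M[F]_l :=
  \matrix_(i < l, j < l)
     if (j.+1 == l)%N then - chi`_i else ((i : nat) == j.+1)%:R.

Definition pair_equiv (F : fieldType) (l : nat) (A B A' B' : 'M[F]_l) : Prop :=
  exists P Q : 'M[F]_l, [/\ P \in unitmx, Q \in unitmx,
                            A' = P *m A *m Q & B' = P *m B *m Q].

(* (d - x b)^l chi((x a - c)/(d - x b)) with denominators cleared:
   sum_i chi_i (x a - c)^i (d - x b)^(l - i). *)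
Definition mobius_poly (F : fieldType) (l : nat) (a b c d : F) (chi : {poly F})
  : {poly F} :=
  \sum_(i < l.+1) chi`_i *: ((a *: 'X - c%:P) ^+ i * (d%:P - b *: 'X) ^+ (l - i)).

(* Main.v *)
Require Import Defs.
From HB Require Import structures.
From mathcomp Require Import all_boot all_order all_algebra.
From mathcomp Require Import ring.
Set Implicit Arguments. Unset Strict Implicit. Unset Printing Implicit Defensive.
Import GRing.Theory.
Local Open Scope ring_scope.

Lemma char_poly_trmx' (R : comNzRingType) n (A : 'M[R]_n) :
  char_poly A^T = char_poly A.
Proof.
rewrite /char_poly -det_tr; congr (\det _).
by apply/matrixP => i j; rewrite !mxE eq_sym.
Qed.

Lemma charp_comp (F : fieldType) (chi : {poly F}) :
  chi \is monic -> char_poly (companion (size chi).-1 chi) = chi.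
Proof.
move=> Hm; rewrite -[RHS](companionmxK Hm) -char_poly_trmx'; congr char_poly.
apply/matrixP => i j; rewrite !mxE.
have := ltn_ord j; set d := (size chi).-1 => Hj.
have -> : (j.+1 == d) = (j == d.-1 :> nat).
  by apply/eqP/eqP => [<-|->] //; rewrite prednK // (leq_ltn_trans _ Hj).
by case: ifP => // _; rewrite eq_sym.
Qed.

Lemma horner_charp (K : fieldType) n (A : 'M[K]_n) x :
  (char_poly A).[x] = \det (x%:M - A).
Proof.
rewrite (_ : (char_poly A).[x] = horner_eval x (char_poly A)) // /char_poly -det_map_mx; congr (\det _).
by apply/matrixP => i j; rewrite !mxE rmorphB rmorphMn /= !horner_evalE hornerX hornerC.
Qed.

Lemma det_hom (K : fieldType) n (A : 'M[K]_n) s t :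
  \det (s%:M - t *: A) = \sum_(i < n.+1) (char_poly A)`_i * s ^+ i * t ^+ (n - i).
Proof.
have Hs := size_char_poly A; have Hm := char_poly_monic A.
have [->|t0] := eqVneq t 0.
  rewrite scale0r subr0 det_scalar big_ord_recr /= subnn expr0 mulr1.
  rewrite big1 ?add0r.
    by have := Hm; rewrite monicE /lead_coef Hs => /eqP ->; rewrite mul1r.
  by move=> i _; rewrite expr0n subn_eq0 /= leqNgt ltn_ord mulr0.
have -> : s%:M - t *: A = t *: ((s / t)%:M - A).
  by rewrite scalerBr scale_scalar_mx mulrC divfK.
rewrite -mul_scalar_mx det_mulmx det_scalar.
rewrite -horner_charp horner_coef Hs mulr_sumr; apply: eq_bigr => i _.
have Hi : (i <= n)%N by rewrite -ltnS.
rewrite -{1}(subnKC Hi) exprD expr_div_n.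
by field; rewrite expf_neq0.
Qed.

Lemma charp_comp' (F : fieldType) l (chi : {poly F}) :
  chi \is monic -> size chi = l.+1 -> char_poly (companion l chi) = chi.
Proof. by move=> Hm Hs; have := charp_comp Hm; rewrite Hs. Qed.

Lemma det_poly_hom (F : fieldType) l (chi : {poly F}) (s t : {poly F}) :
  chi \is monic -> size chi = l.+1 ->
  \det (s%:M - t *: map_mx polyC (companion l chi)) =
  \sum_(i < l.+1) chi`_i *: (s ^+ i * t ^+ (l - i)).
Proof.
move=> Hm Hs; have Hc := charp_comp' Hm Hs.
apply/eqP; rewrite -tofrac_eq; apply/eqP.
rewrite -det_map_mx map_mxB map_mxZ map_scalar_mx det_hom.
rewrite -!map_char_poly Hc rmorph_sum; apply: eq_bigr => i _.
by rewrite !coef_map /= -mul_polyC !rmorphM /= !rmorphXn mulrA.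
Qed.

Lemma pencil (F : fieldType) l (M : 'M[F]_l) (a b c d : F) :
  'X *: map_mx polyC (a%:M + b *: M) - map_mx polyC (c%:M + d *: M) =
  (a *: 'X - c%:P)%:M - (d%:P - b *: 'X) *: map_mx polyC M.
Proof.
apply/matrixP => i j; rewrite !mxE -!mul_polyC !rmorphD !rmorphM !rmorphMn /=.
by case: (i == j) => /=; ring.
Qed.

Theorem lemma2 (F : fieldType) (l : nat) (chi eta : {poly F}) (a b c d : F) :
  (0 < l)%N ->
  chi \is monic -> size chi = l.+1 ->
  eta \is monic -> size eta = l.+1 ->
  a * d - b * c != 0 ->
  (pair_equiv (a%:M + b *: companion l chi) (c%:M + d *: companion l chi)
              1%:M (companion l eta) ->
   exists eps : F, eta = eps *: mobius_poly l a b c d chi)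
  /\
  ((a%:M + b *: companion l chi) \in unitmx ->
   (exists eps : F, eta = eps *: mobius_poly l a b c d chi) ->
   char_poly ((c%:M + d *: companion l chi) *m invmx (a%:M + b *: companion l chi))
   = char_poly (companion l eta)).
Proof.
move=> _ Hmc Hsc Hme Hse _.
set A := a%:M + b *: companion l chi; set B := c%:M + d *: companion l chi.
have Hmob : \det ('X *: map_mx polyC A - map_mx polyC B) = mobius_poly l a b c d chi.
  by rewrite pencil det_poly_hom.
split.
  move=> [P [Q [uP uQ e1 e2]]].
  exists (\det P * \det Q).
  rewrite -{1}(charp_comp' Hme Hse) /char_poly /char_poly_mx e2.
  have -> : ('X%:M : 'M[{poly F}]_l) =
      map_mx polyC P *m ('X *: map_mx polyC A) *m map_mx polyC Q.
    by rewrite -scalemxAr -scalemxAl -!map_mxM -e1 map_mx1 scalemx1.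
  rewrite !map_mxM -mulmxBl -mulmxBr !det_mulmx Hmob !det_map_mx.
  by rewrite -!mul_polyC polyCM mulrC mulrA [_ * (\det Q)%:P]mulrC.
move=> uA [eps He].
have key : char_poly (B *m invmx A) * (\det A)%:P = mobius_poly l a b c d chi.
  rewrite -Hmob -det_map_mx /char_poly -det_mulmx /char_poly_mx; congr (\det _).
  rewrite mulmxBl mul_scalar_mx map_mxM -mulmxA -map_mxM mulVmx // map_mx1 mulmx1.
  done.
have H1 : \det A * eps = 1.
  have := Hme; rewrite He -key monicE lead_coefZ lead_coefM lead_coefC.
  have := char_poly_monic (B *m invmx A); rewrite monicE => /eqP ->.
  by rewrite mul1r mulrC => /eqP.
by rewrite (charp_comp' Hme Hse) He -key -mul_polyC mulrC -mulrA -polyCM H1 polyC1 mulr1.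
Qed.
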